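(* Let $K \subset L$ be fields and let $D: L \to L$ be a derivation (an additive map satisfying $D(ab) = aD(b) + D(a)b$) such that $\ker D = K$. Then the map \[ L \otimes_K \ker D^1 \longrightarrow \Omega_{L/K}, \qquad f \otimes \omega \mapsto f\omega, \] is injective.
   Context: $\Omega_{L/K}$ is the $L$-vector space of Kähler differentials of $L$ over $K$, with universal $K$-derivation $d: L \to \Omega_{L/K}$. Since $D(K)=0$, there is a unique $K$-linear map $D^1: \Omega_{L/K} \to \Omega_{L/K}$ with $D^1(f\, dg) = (Df)\, dg + f\, d(Dg)$ for all $f, g \in L$; $\ker D^1$ is a $K$-subspace of $\Omega_{L/K}$. *)

(* Defs.v *)
From HB Require Import structures.
From mathcomp Require Import all_boot all_order all_algebra.
Set Implicit Arguments. Unset Strict Implicit. Unset Printing Implicit Defensive.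
Import GRing.Theory.
Local Open Scope ring_scope.

Definition is_derivation (L : fieldType) (D : L -> L) : Prop :=
  (forall a b, D (a + b) = D a + D b) /\
  (forall a b, D (a * b) = a * D b + D a * b).

Definition kerD (L : fieldType) (D : L -> L) : pred L := fun x => D x == 0.

Definition is_Kder (L : fieldType) (K : pred L) (M : lmodType L) (d : L -> M)
  : Prop :=
  (forall a b, d (a + b) = d a + d b) /\
  (forall k a, k \in K -> d (k * a) = k *: d a) /\
  (forall a b, d (a * b) = a *: d b + b *: d a).

Definition Llinear (L : fieldType) (U V : lmodType L) (phi : U -> V) : Prop :=
  forall (a : L) (x y : U), phi (a *: x + y) = a *: phi x + phi y.

(* (Om, d) is the module of Kaehler differentials Omega_{L/K} with universal
   K-derivation d, characterized by its universal property. *)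
Definition is_kahler (L : fieldType) (K : pred L) (Om : lmodType L)
  (d : L -> Om) : Prop :=
  is_Kder K d /\
  forall (M : lmodType L) (delta : L -> M), is_Kder K delta ->
    exists phi : Om -> M,
      [/\ Llinear phi, (forall f, phi (d f) = delta f) &
          forall psi : Om -> M, Llinear psi ->
            (forall f, psi (d f) = delta f) -> forall x, psi x = phi x].

Definition is_D1 (L : fieldType) (D : L -> L) (Om : lmodType L) (d : L -> Om)
  (D1 : Om -> Om) : Prop :=
  [/\ (forall x y, D1 (x + y) = D1 x + D1 y),
      (forall k x, k \in kerD D -> D1 (k *: x) = k *: D1 x) &
      (forall f g, D1 (f *: d g) = D f *: d g + f *: d (D g))].

Definition kerD1 (L : fieldType) (Om : lmodType L) (D1 : Om -> Om) : pred Om :=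
  fun w => D1 w == 0.

(* t : L x W -> A is K-balanced and biadditive (only its values on W matter). *)
Definition balanced (L : fieldType) (K : pred L) (Om : lmodType L)
  (W : pred Om) (A : zmodType) (t : L -> Om -> A) : Prop :=
  [/\ (forall f1 f2 w, w \in W -> t (f1 + f2) w = t f1 w + t f2 w),
      (forall f w1 w2, w1 \in W -> w2 \in W -> t f (w1 + w2) = t f w1 + t f w2) &
      (forall k f w, k \in K -> w \in W -> t (k * f) w = t f (k *: w))].

(* (T, t) is the tensor product L (x)_K W, with t f w = f (x) w,
   characterized by its universal property (as an additive group). *)
Definition is_tensor (L : fieldType) (K : pred L) (Om : lmodType L)
  (W : pred Om) (T : zmodType) (t : L -> Om -> T) : Prop :=
  balanced K W t /\
  forall (A : zmodType) (b : L -> Om -> A), balanced K W b ->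
    exists phi : T -> A,
      [/\ (forall x y, phi (x + y) = phi x + phi y),
          (forall f w, w \in W -> phi (t f w) = b f w) &
          forall psi : T -> A, (forall x y, psi (x + y) = psi x + psi y) ->
            (forall f w, w \in W -> psi (t f w) = b f w) ->
            forall x, psi x = phi x].

(* Main.v *)
Require Import Defs.
From HB Require Import structures.
From mathcomp Require Import all_boot all_order all_algebra.
From Stdlib Require Import ClassicalEpsilon FunctionalExtensionality PropExtensionality.
Import GRing.Theory.
Local Open Scope ring_scope.
Set Implicit Arguments. Unset Strict Implicit. Unset Printing Implicit Defensive.

Record subgrp (V : zmodType) (C : V -> Prop) : Prop :=
  { sg0 : C 0; sgB : forall a b, C a -> C b -> C (a - b) }.

Definition qr (V : zmodType) (C : V -> Prop) (x : V) : V :=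
  epsilon (inhabits 0) (fun y => C (x - y)).

Section QL.
Variables (V : zmodType) (C : V -> Prop) (hC : subgrp C).
Lemma sgN a : C a -> C (- a).
Proof. by move=> Ha; rewrite -sub0r; apply: sgB => //; apply: sg0. Qed.
Lemma sgD a b : C a -> C b -> C (a + b).
Proof. by move=> Ha Hb; rewrite -[b]opprK; apply: sgB => //; apply: sgN. Qed.
Lemma qr_spec x : C (x - qr C x).
Proof. by rewrite /qr; apply: (epsilon_spec (inhabits 0) (fun y => C (x - y))); exists x; rewrite subrr; apply: sg0. Qed.
Lemma qr_eq x y : C (x - y) -> qr C x = qr C y.
Proof.
move=> Hxy; rewrite /qr; congr epsilon; apply: functional_extensionality => z.
apply: propositional_extensionality; split => H.
  have -> : y - z = - (x - y) + (x - z) by rewrite addrA opprB addrNK.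
  by apply: sgD => //; apply: sgN.
have -> : x - z = (x - y) + (y - z) by rewrite addrA addrNK.
by apply: sgD.
Qed.
Lemma qr_idem x : qr C (qr C x) = qr C x.
Proof. by apply: qr_eq; rewrite -opprB; apply: sgN; apply: qr_spec. Qed.
Lemma qr_addl x y : qr C (qr C x + y) = qr C (x + y).
Proof. by apply: qr_eq; rewrite opprD addrACA subrr addr0 -opprB; apply: sgN; apply: qr_spec. Qed.
Lemma qr_add2 x y : qr C (qr C x + qr C y) = qr C (x + y).
Proof. by rewrite qr_addl addrC qr_addl addrC. Qed.
Lemma qr0C x : qr C x = qr C 0 -> C x.
Proof. move=> H; have := qr_spec x; rewrite H => H1.
have H2 := qr_spec 0; rewrite sub0r in H2.
by have := sgB hC H1 H2; rewrite opprK subrK.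
Qed.
End QL.

Definition Q (V : zmodType) (C : V -> Prop) (hC : subgrp C) := {x : V | qr C x == x}.
HB.instance Definition _ V C hC := Choice.on (@Q V C hC).

Section QZ.
Variables (V : zmodType) (C : V -> Prop) (hC : subgrp C).
Definition qpi (x : V) : Q hC := exist _ (qr C x) (introT eqP (qr_idem hC x)).
Lemma qpi_val (a : Q hC) : qpi (val a) = a.
Proof. by apply: val_inj => /=; apply/eqP; case: a. Qed.
Lemma qpi_eq x y : qr C x = qr C y -> qpi x = qpi y.
Proof. by move=> H; apply: val_inj. Qed.
Definition qzero := qpi 0.
Definition qadd (a b : Q hC) := qpi (val a + val b).
Definition qopp (a : Q hC) := qpi (- val a).
Lemma qaddA : associative qadd.
Proof. move=> a b c; rewrite /qadd /=; apply: qpi_eq.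
by rewrite (qr_addl hC) addrC (qr_addl hC) addrC addrA. Qed.
Lemma qaddC : commutative qadd.
Proof. by move=> a b; rewrite /qadd addrC. Qed.
Lemma qadd0 : left_id qzero qadd.
Proof. move=> a; rewrite /qadd /= -{2}(qpi_val a); apply: qpi_eq. by rewrite (qr_addl hC) add0r. Qed.
Lemma qaddN : left_inverse qzero qopp qadd.
Proof. move=> a; rewrite /qadd /= /qzero; apply: qpi_eq. by rewrite (qr_addl hC) addNr. Qed.
End QZ.
HB.instance Definition _ V C hC := GRing.isZmodule.Build (@Q V C hC) (@qaddA V C hC) (@qaddC V C hC) (@qadd0 V C hC) (@qaddN V C hC).

Lemma qpiD (V : zmodType) (C : V -> Prop) (hC : subgrp C) x y : qpi hC (x + y) = qpi hC x + qpi hC y.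
Proof. rewrite [RHS](_ : _ = qadd (qpi hC x) (qpi hC y)) //; apply: qpi_eq => /=.
by rewrite (qr_addl hC) [x + qr C y]addrC (qr_addl hC) addrC. Qed.
Lemma qpi0 (V : zmodType) (C : V -> Prop) (hC : subgrp C) x : C x -> qpi hC x = 0.
Proof. move=> Hx; apply: qpi_eq; apply: qr_eq => //; by rewrite subr0. Qed.
Lemma qpi0C (V : zmodType) (C : V -> Prop) (hC : subgrp C) x : qpi hC x = 0 -> C x.
Proof. move=> H; apply: qr0C => //. by have := congr1 val H. Qed.

Definition Qm (R : pzRingType) (V : lmodType R) (C : V -> Prop) (hC : subgrp C)
  (hS : forall c x, C x -> C (c *: x)) := Q hC.
HB.instance Definition _ R V C hC hS := GRing.Zmodule.on (@Qm R V C hC hS).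
Section QM.
Variables (R : pzRingType) (V : lmodType R) (C : V -> Prop) (hC : subgrp C)
  (hS : forall c x, C x -> C (c *: x)).
Definition qscale (c : R) (a : Qm hC hS) : Qm hC hS := qpi hC (c *: val a).
Lemma qscale_l c x : qr C (c *: qr C x) = qr C (c *: x).
Proof. apply: qr_eq => //; rewrite -scalerBr -opprB; apply: hS; apply: sgN => //; exact: qr_spec. Qed.
Lemma qscaleA a b v : qscale a (qscale b v) = qscale (a * b) v.
Proof. by apply: qpi_eq; rewrite /= qscale_l scalerA. Qed.
Lemma qscale1 : left_id 1 qscale.
Proof. by move=> a; rewrite /qscale scale1r qpi_val. Qed.
Lemma qscaleDr : right_distributive qscale +%R.
Proof. move=> c a b; apply: qpi_eq => /=.
by rewrite qscale_l scalerDr (qr_add2 hC). Qed.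
Lemma qscaleDl v : {morph qscale^~ v: a b / a + b}.
Proof. move=> a b; apply: qpi_eq => /=. by rewrite scalerDl (qr_add2 hC). Qed.
End QM.
HB.instance Definition _ R V C hC hS := GRing.Zmodule_isLmodule.Build R (@Qm R V C hC hS)
  (@qscaleA R V C hC hS) (@qscale1 R V C hC hS) (@qscaleDr R V C hC hS) (@qscaleDl R V C hC hS).

Lemma qpiZ (R : pzRingType) (V : lmodType R) (C : V -> Prop) (hC : subgrp C)
  (hS : forall c x, C x -> C (c *: x)) c x : (qpi hC (c *: x) : Qm hC hS) = c *: (qpi hC x : Qm hC hS).
Proof. rewrite [RHS](_ : _ = @qscale _ _ _ hC hS c (qpi hC x)) //; apply: qpi_eq => /=. by rewrite qscale_l. Qed.


Lemma add_f0 (U V : zmodType) (f : U -> V) : (forall x y, f (x + y) = f x + f y) -> f 0 = 0.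
Proof. move=> hf; have h := hf 0 0; rewrite addr0 in h.
by rewrite -[RHS](subrr (f 0)) {2}h addrK. Qed.
Lemma add_fN (U V : zmodType) (f : U -> V) : (forall x y, f (x + y) = f x + f y) -> forall x, f (- x) = - f x.
Proof. move=> hf x; apply/eqP; rewrite -subr_eq0 opprK -hf addNr; apply/eqP; exact: add_f0. Qed.
Lemma add_fsum (U V : zmodType) (f : U -> V) (I : Type) (s : seq I) (F : I -> U) :
  (forall x y, f (x + y) = f x + f y) -> f (\sum_(i <- s) F i) = \sum_(i <- s) f (F i).
Proof. move=> hf; elim: s => [|a s IH]; first by rewrite !big_nil; exact: add_f0.
by rewrite !big_cons hf IH. Qed.

Lemma help1 (V : zmodType) (w A1 A2 B1 B2 c : V) :
  w + (A1 + (c + A2)) = 0 -> B1 + (c + B2) = 0 -> w + ((A1 - B1) + (A2 - B2)) = 0.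
Proof.
rewrite [A1 + _]addrCA [w + _]addrCA => /addr0_eq h1; rewrite [B1 + _]addrCA => /addr0_eq h2.
by rewrite addrACA -opprD -h2 addrA -h1 subrr.
Qed.
Lemma help2 (V : zmodType) (w A1 A2 B1 B2 c : V) :
  w + ((A1 - B1) + (A2 - B2)) = 0 -> B1 + (c + B2) = 0 -> w + (A1 + (c + A2)) = 0.
Proof.
rewrite addrACA -opprD addrA => h1; rewrite [B1 + _]addrCA => /addr0_eq h2.
rewrite -h2 opprK in h1.
by rewrite [A1 + _]addrCA [w + _]addrCA addrC h1.
Qed.

Section Main.
Variables (L : fieldType) (D : L -> L) (Om : lmodType L) (d : L -> Om)
  (D1 : Om -> Om) (T : zmodType) (t : L -> Om -> T).
Hypotheses (hD : is_derivation D) (hK : is_kahler (kerD D) d) (hD1 : is_D1 D d D1)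
  (hT : is_tensor (kerD D) (kerD1 D1) t).

Lemma inK k : (k \in kerD D) = (D k == 0). Proof. by []. Qed.
Lemma inW w : (w \in kerD1 D1) = (D1 w == 0). Proof. by []. Qed.

Lemma D_1 : D 1 = 0.
Proof. case: hD => _ hM; have := hM 1 1; rewrite !mul1r mulr1 => h.
by rewrite -[RHS](subrr (D 1)) {2}h addrK. Qed.

Lemma Om_gen x : exists s : seq (L * L), x = \sum_(p <- s) p.1 *: d p.2.
Proof.
pose C := fun x : Om => exists s : seq (L * L), x = \sum_(p <- s) p.1 *: d p.2.
have hC : subgrp C.
  split; first by exists [::]; rewrite big_nil.
  move=> a b [sa ->] [sb ->]; exists (sa ++ map (fun p => (- p.1, p.2)) sb).
  by rewrite big_cat big_map /= -sumrN; congr (_ + _); apply: eq_bigr => p _; rewrite scaleNr.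
have hS : forall c x, C x -> C (c *: x).
  move=> c _ [s ->]; exists (map (fun p => (c * p.1, p.2)) s).
  by rewrite big_map scaler_sumr; apply: eq_bigr => p _; rewrite scalerA.
case: hK => _ /(_ (Qm hC hS) (fun _ => 0)) [].
  split; first by move=> *; rewrite addr0.
  split; first by move=> *; rewrite scaler0.
  by move=> *; rewrite !scaler0 addr0.
move=> phi [_ _ uniq].
have e1 := uniq (qpi hC : Om -> Qm hC hS).
have e2 := uniq (fun _ => 0).
apply: (qpi0C (hC := hC)).
rewrite (e1 _ _ x); last first.
- move=> f; apply: qpi0; exists [:: (1, f)]; by rewrite big_seq1 scale1r.
- by move=> a u v; rewrite qpiD qpiZ.
rewrite -(e2 _ _ x) //; by move=> *; rewrite scaler0 addr0.
Qed.


Lemma D1_0 : D1 0 = 0.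
Proof. case: hD1 => h _ _; exact: add_f0. Qed.

Lemma D1_leib a x : D1 (a *: x) = D a *: x + a *: D1 x.
Proof.
case: hD => DD DM; case: hD1 => D1D D1K D1d.
have [s ->] := Om_gen x.
rewrite scaler_sumr (add_fsum _ _ D1D) scaler_sumr scaler_sumr -big_split /=.
rewrite (add_fsum _ _ D1D); apply: eq_bigr => p _.
rewrite [in LHS]scalerA D1d [in RHS]D1d DM.
rewrite scalerDl scalerDr !scalerA.
by rewrite [a * D _ *: _ + _]addrC -!addrA.
Qed.

Lemma D1_W a w : w \in kerD1 D1 -> D1 (a *: w) = D a *: w.
Proof. rewrite inW => /eqP h; by rewrite D1_leib h scaler0 addr0. Qed.

Notation W := (kerD1 D1).

Lemma W0 : 0 \in W. Proof. by rewrite inW D1_0. Qed.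
Lemma WD u v : u \in W -> v \in W -> u + v \in W.
Proof. case: hD1 => D1D _ _; rewrite !inW => /eqP hu /eqP hv; by rewrite D1D hu hv addr0. Qed.
Lemma WZ a u : u \in W -> a *: u \in W.
Proof. rewrite !inW => /eqP hu. Abort.
Lemma WK k u : k \in kerD D -> u \in W -> k *: u \in W.
Proof. case: hD1 => _ D1K _; rewrite !inW => hk /eqP hu; by rewrite D1K // hu scaler0. Qed.

Lemma tDl f1 f2 w : w \in W -> t (f1 + f2) w = t f1 w + t f2 w.
Proof. by case: hT => [[h _ _] _]; apply: h. Qed.
Lemma t0l w : w \in W -> t 0 w = 0.
Proof. move=> hw; apply: (add_f0 (f := fun f => t f w)) => x y; exact: tDl. Qed.
Lemma tNl f w : w \in W -> t (- f) w = - t f w.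
Proof. move=> hw; apply: (add_fN (f := fun f => t f w)) => x y; exact: tDl. Qed.
Lemma tBl f1 f2 w : w \in W -> t (f1 - f2) w = t f1 w - t f2 w.
Proof. by move=> hw; rewrite tDl // tNl. Qed.
Lemma tDr f w1 w2 : w1 \in W -> w2 \in W -> t f (w1 + w2) = t f w1 + t f w2.
Proof. by case: hT => [[_ h _] _]; apply: h. Qed.
Lemma t0r f : t f 0 = 0.
Proof. have h := tDr f W0 W0; rewrite addr0 in h.
by rewrite -[RHS](subrr (t f 0)) {2}h addrK. Qed.
Lemma tK k f w : k \in kerD D -> w \in W -> t (k * f) w = t f (k *: w).
Proof. by case: hT => [[_ _ h] _]; apply: h. Qed.

Lemma mult c : exists m : T -> T, (forall x y, m (x + y) = m x + m y) /\
  forall f w, w \in W -> m (t f w) = t (c * f) w.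
Proof.
case: hT => _ /(_ T (fun f w => t (c * f) w)) [].
  split => [f1 f2 w hw|f w1 w2 h1 h2|k f w hk hw].
  - by rewrite mulrDr tDl.
  - by rewrite tDr.
  - by rewrite mulrCA; apply: tK.
by move=> m [h1 h2 _]; exists m.
Qed.

Definition tsum (s : seq (L * Om)) := \sum_(p <- s) t p.1 p.2.
Definition rel (s : seq (L * Om)) := \sum_(p <- s) p.1 *: p.2.
Definition allW (s : seq (L * Om)) := all (fun p => p.2 \in W) s.

Lemma allW_cat s1 s2 : allW (s1 ++ s2) = allW s1 && allW s2.
Proof. exact: all_cat. Qed.
Lemma allW_cons p s : allW (p :: s) = (p.2 \in W) && allW s.
Proof. by []. Qed.

Lemma allWP s p : allW s -> p \in s -> p.2 \in W.
Proof. by move/allP; apply. Qed.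

Lemma T_gen x : exists s, allW s /\ x = tsum s.
Proof.
pose C := fun x : T => exists s, allW s /\ x = tsum s.
have hC : subgrp C.
  split; first by exists [::]; rewrite /tsum big_nil.
  move=> a b [sa [ha ->]] [sb [hb ->]]; exists (sa ++ map (fun p => (- p.1, p.2)) sb).
  split; first by rewrite /allW all_cat; apply/andP; split => //; rewrite all_map; exact: hb.
  rewrite /tsum big_cat big_map /= -sumrN; congr (_ + _).
  rewrite big_seq_cond [RHS]big_seq_cond; apply: eq_bigr => p /andP [hp _].
  by rewrite tNl //; move/allP: hb; apply.
case: hT => _ /(_ (Q hC) (fun _ _ => 0)) [].
  by split => *; rewrite ?addr0 ?add0r.
move=> phi [_ _ uniq].
have e1 := uniq (qpi hC).
have e2 := uniq (fun _ => 0).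
apply: (qpi0C (hC := hC)).
rewrite (e1 _ _ x); last first.
- move=> f w hw; apply: qpi0; exists [:: (f, w)]; by rewrite /allW /= hw /tsum big_seq1.
- by move=> u v; rewrite qpiD.
rewrite -(e2 _ _ x) //; by move=> *; rewrite addr0.
Qed.

Lemma allK_tsum s : all (fun p => (p.1 \in kerD D) && (p.2 \in W)) s ->
  rel s \in W /\ tsum s = t 1 (rel s).
Proof.
elim: s => [|[f w] s IH]; first by rewrite /rel /tsum !big_nil t0r W0.
move=> /= /andP [/andP [hf hw] /IH [h1 h2]].
rewrite /rel /tsum !big_cons /= -/(rel s) -/(tsum s) h2.
have hfw : f *: w \in W by apply: WK.
split; first by apply: WD.
by rewrite tDr // -tK // mulr1.
Qed.

Lemma claim n : forall s, (size s <= n)%N -> allW s -> rel s = 0 -> tsum s = 0.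
Proof.
case: hD1 => D1D _ _.
elim: n => [|n IH] s.
  by case: s => // _ _ _; rewrite /tsum big_nil.
have norm : forall w s', (size s' <= n)%N -> allW ((1, w) :: s') ->
    rel ((1, w) :: s') = 0 -> tsum ((1, w) :: s') = 0.
  move=> w s' hs /andP [hw hW] hr; rewrite /= in hw.
  have h0 : \sum_(p <- s') D p.1 *: p.2 = 0.
    have := congr1 D1 hr; rewrite D1_0 /rel big_cons D1D /= D1_W // D_1 scale0r add0r.
    rewrite (add_fsum _ _ D1D) => H; rewrite -[RHS]H; apply: eq_big_seq => p hp.
    by rewrite D1_W //; move/allP: hW; apply.
  have R2 : forall e, rel (map (fun p => (e * D p.1, p.2)) s') = 0.
    move=> e; rewrite /rel big_map -[RHS](scaler0 _ e) -[in RHS]h0 scaler_sumr.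
    by apply: eq_bigr => p _; rewrite scalerA.
  have T2 : forall e, tsum (map (fun p => (e * D p.1, p.2)) s') = 0.
    move=> e; apply: IH; first by rewrite size_map.
      by rewrite /allW all_map.
    exact: R2.
  case: (boolP (has (fun p => D p.1 != 0) s')) => [/hasP [[a v] hin /= hDa] | /hasPn hno].
    move: hs hW hr R2 T2; case/splitPr: hin => s1 s2 hs hW hr R2 T2.
    set e := a / D a.
    have hea : e * D a = a by rewrite /e divfK.
    pose h := fun p : L * Om => (p.1 - e * D p.1, p.2).
    have hW' : allW s1 /\ allW s2 /\ v \in W.
      have hWc : allW (s1 ++ (a, v) :: s2) by exact: hW.
      by move: hWc; rewrite allW_cat allW_cons => /and3P [h1 h2 h3]; split; [exact: h1| split; [exact: h3| exact: h2]].
    case: hW' => hW1 [hW2 hv].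
    have HX : tsum (map h ((1, w) :: s1 ++ s2)) = 0.
      apply: IH.
      - by rewrite size_map /= size_cat; move: hs; rewrite size_cat /= addnS.
      - rewrite /allW /= all_map hw /=; rewrite -/(allW (s1 ++ s2)) allW_cat hW1 hW2 //.
      - move: hr (R2 e); rewrite /rel /= !big_cons !big_map !big_cat !big_cons /= D_1 mulr0 subr0.
        have E : forall q : seq (L * Om), \sum_(p <- q) (p.1 - e * D p.1) *: p.2 =
          \sum_(p <- q) p.1 *: p.2 - \sum_(p <- q) (e * D p.1) *: p.2.
        by move=> q; rewrite -sumrN -big_split; apply: eq_bigr => p _; rewrite scalerBl.
        rewrite !E hea; exact: help1.
    move: HX (T2 e); rewrite /tsum /= !big_cons !big_map !big_cat !big_cons /= D_1 mulr0 subr0.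
    have E : forall s0 : seq (L * Om), allW s0 -> \sum_(p <- s0) t (p.1 - e * D p.1) p.2 =
      \sum_(p <- s0) t p.1 p.2 - \sum_(p <- s0) t (e * D p.1) p.2.
      move=> s0 hs0; rewrite -sumrN -big_split; apply: eq_big_seq => p hp; rewrite tBl //.
      by move/allP: hs0; apply.
    rewrite (E _ hW1) (E _ hW2) hea; exact: help2.
  have hKs : all (fun p => (p.1 \in kerD D) && (p.2 \in W)) ((1, w) :: s').
    rewrite /= inK D_1 eqxx hw /=; apply/allP => p hp.
    rewrite inK; have := hno p hp; rewrite negbK => -> /=.
    by move/allP: hW; apply.
  by have [_ ->] := allK_tsum hKs; rewrite hr t0r.
case: s => [|[f w] s'] hs hW hr; first by rewrite /tsum big_nil.
case: (eqVneq f 0) => [ef|hf].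
  rewrite ef /tsum big_cons /= t0l; last by case/andP: hW.
  rewrite add0r; apply: IH => //; first by case/andP: hW.
  by move: hr; rewrite ef /rel big_cons scale0r add0r.
have [m [mD mt]] := mult f.
pose g := map (fun p : L * Om => (f^-1 * p.1, p.2)) ((f, w) :: s').
have -> : tsum ((f, w) :: s') = m (tsum g).
  rewrite /tsum (add_fsum _ _ mD) big_map; apply: eq_big_seq => p hp.
  rewrite mt; last exact: (allWP hW hp).
  by rewrite mulrA mulfV // mul1r.
have -> : tsum g = 0.
  rewrite /g /= mulVf //; apply: norm; first by rewrite size_map.
    by move: hW; rewrite /allW /= all_map.
  rewrite /rel big_cons big_map /=.
  have := congr1 (fun z => f^-1 *: z) hr; rewrite /rel big_cons scaler0 scalerDr scaler_sumr scalerA mulVf // => H.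
  rewrite -[RHS]H; congr (_ + _); apply: eq_bigr => p _; by rewrite scalerA.
exact: add_f0.
Qed.

End Main.

Theorem lemma3p7 (L : fieldType) (D : L -> L) (Om : lmodType L) (d : L -> Om)
  (D1 : Om -> Om) (T : zmodType) (t : L -> Om -> T) (mu : T -> Om) :
  is_derivation D ->
  is_kahler (kerD D) d ->
  is_D1 D d D1 ->
  is_tensor (kerD D) (kerD1 D1) t ->
  (forall x y, mu (x + y) = mu x + mu y) ->
  (forall f w, w \in kerD1 D1 -> mu (t f w) = f *: w) ->
  injective mu.
Proof.
move=> hD hK hD1 hT hmuD hmu x y hxy.
have hmuN := add_fN hmuD.
have H : mu (x - y) = 0 by rewrite hmuD hmuN hxy subrr.
apply/eqP; rewrite -subr_eq0; apply/eqP; move: H.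
have [s [hs ->]] := T_gen hT (x - y).
move=> H.
apply: (claim hD hK hD1 hT (n := size s)) => //.
move: H; rewrite /tsum (add_fsum _ _ hmuD) => H; rewrite -[RHS]H /rel.
apply: eq_big_seq => p hp; rewrite hmu //; exact: (allWP hs hp).
Qed.
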